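(* Let $\mathcal{X}=\{x_1,\dots,x_N\}$, $\Theta=\{\theta_1,\dots,\theta_M\}$, $\mathcal{A}$ be finite, let $\hat v_D,\hat v_U:\mathcal{X}\times\Theta\times\mathcal{A}\to\mathbb{R}$ be given (modulated) utilities, $b_D(\cdot|x)\in\Delta\Theta$ for $x\in\mathcal{X}$, and $\mathcal{S}=\{s_{\{a^1,\dots,a^M\}}:a^l\in\mathcal{A}\}$. For a common prior $\mathbf p\in\Delta\mathcal{X}$ (held by the defender and all user types), call $\pi:\mathcal{X}\to\Delta\mathcal{S}$ credible at $\mathbf p$ if $\sum_{x}[\hat v_U(x,\theta_l,a^l)-\hat v_U(x,\theta_l,a^h)]\pi(s_{\{a^1,\dots,a^M\}}|x)\mathbf p(x)\ge0$ for all $s_{\{a^1,\dots,a^M\}}\in\mathcal{S}$, $a^h\in\mathcal{A}$, $l$; set $$\bar v_D(\pi,\mathbf p)=\sum_x\mathbf p(x)\sum_{s_{\{a^1,\dots,a^M\}}}\pi(s_{\{a^1,\dots,a^M\}}|x)\sum_{l=1}^M b_D(\theta_l|x)\hat v_D(x,\theta_l,a^l),$$ let $V_D(\mathbf p)$ be the maximum of $\bar v_D(\pi,\mathbf p)$ over credible $\pi$, and let $\tilde v_D(\mathbf p)$ be the maximum of $\bar v_D(\pi,\mathbf p)$ over credible zero-information $\pi$ (i.e. $\pi(s|x)=\pi(s|x')$ for all $s,x,x'$). Then there exists $\mathbf p^0_g\in\Delta\mathcal{X}$ maximizing $\tilde v_D$ over $\Delta\mathcal{X}$, and for any such $\mathbf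 p^0_g$ it also maximizes $V_D$ over $\Delta\mathcal{X}$ with $\tilde v_D(\mathbf p^0_g)=V_D(\mathbf p^0_g)=\max_{\mathbf p\in\Delta\mathcal{X}}V_D(\mathbf p)$. Consequently, the optimal value of the joint choice of the common prior $\mathbf p\in\Delta\mathcal{X}$ and a credible generator at $\mathbf p$ does not depend on the original initial belief, and it is attained by choosing $\mathbf p=\mathbf p^0_g$ together with a zero-information generator.
   Context: Defender–user game with an overt trust manipulator: the defender may choose the common initial belief over the state that both she and all user types hold; the modulator (utility transfer) is fixed and already incorporated into $\hat v_D,\hat v_U$. A signal $s_{\{a^1,\dots,a^M\}}$ prescribes action $a^l$ to type $\theta_l$. *)

(* Defs.v *)
From mathcomp Require Import all_boot all_order all_algebra.
From mathcomp Require Import boolp classical_sets reals.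
Set Implicit Arguments. Unset Strict Implicit. Unset Printing Implicit Defensive.
Import Order.TTheory GRing.Theory Num.Theory.
Local Open Scope ring_scope.
Local Open Scope classical_set_scope.

Definition dist (R : realType) (T : finType) (p : T -> R) : Prop :=
  (forall t, 0 <= p t) /\ \sum_(t : T) p t = 1.

(* Signals s_{a^1,...,a^M}: the l-th component is the action prescribed to type theta_l. *)
Definition Signal (M : nat) (A : finType) := {ffun 'I_M -> A}.

Definition generator (R : realType) (X A : finType) (M : nat)
  (pi : X -> Signal M A -> R) : Prop := forall x, dist (pi x).

Definition credible (R : realType) (X A : finType) (M : nat)
  (vU : X -> 'I_M -> A -> R) (pi : X -> Signal M A -> R) (p : X -> R) : Prop :=
  forall (s : Signal M A) (ah : A) (l : 'I_M),
    0 <= \sum_(x : X) (vU x l (s l) - vU x l ah) * pi x s * p x.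

Definition zero_info (R : realType) (X A : finType) (M : nat)
  (pi : X -> Signal M A -> R) : Prop :=
  forall (s : Signal M A) (x x' : X), pi x s = pi x' s.

Definition vbar (R : realType) (X A : finType) (M : nat)
  (vD : X -> 'I_M -> A -> R) (bD : X -> 'I_M -> R)
  (pi : X -> Signal M A -> R) (p : X -> R) : R :=
  \sum_(x : X) p x * \sum_(s : Signal M A) pi x s *
     \sum_(l < M) bD x l * vD x l (s l).

(* V_D(p): optimal value over credible generators (as a supremum; the
   theorem additionally asserts that it is attained, i.e. is a maximum). *)
Definition VD (R : realType) (X A : finType) (M : nat)
  (vD vU : X -> 'I_M -> A -> R) (bD : X -> 'I_M -> R) (p : X -> R) : R :=
  sup [set v | exists pi : X -> Signal M A -> R,
         [/\ generator pi, credible vU pi p & v = vbar vD bD pi p]].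

Definition tildeVD (R : realType) (X A : finType) (M : nat)
  (vD vU : X -> 'I_M -> A -> R) (bD : X -> 'I_M -> R) (p : X -> R) : R :=
  sup [set v | exists pi : X -> Signal M A -> R,
         [/\ generator pi, zero_info pi, credible vU pi p & v = vbar vD bD pi p]].

(* Main.v *)
Require Import Defs.
From mathcomp Require Import all_boot all_order all_algebra.
From mathcomp Require Import boolp classical_sets reals ring.
From mathcomp Require Import topology normedtype matrix_normedtype derive.
Import Order.TTheory GRing.Theory Num.Theory.
Import numFieldNormedType.Exports.
Local Open Scope ring_scope.
Local Open Scope classical_set_scope.

Section LP.
Variable R : realType.

Lemma lin_cont_seq (T : finType) (w : T -> R) (s : seq T) :
  continuous (fun v : 'rV[R]_#|T| => \sum_(t <- s) w t * v ord0 (enum_rank t)).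
Proof.
elim: s => [|t s IH].
  have -> : (fun v : 'rV[R]_#|T| => \sum_(t <- [::]) w t * v ord0 (enum_rank t)) = fun _ => 0.
    by apply/funext => v; rewrite big_nil.
  exact: cst_continuous.
have -> : (fun v : 'rV[R]_#|T| => \sum_(i <- t :: s) w i * v ord0 (enum_rank i)) =
   (fun v => (fun v : 'rV[R]_#|T| => w t * v ord0 (enum_rank t)) v +
     (fun v : 'rV[R]_#|T| => \sum_(i <- s) w i * v ord0 (enum_rank i)) v).
  by apply/funext => v; rewrite big_cons.
move=> v.
have H1 : {for v, continuous (fun v : 'rV[R]_#|T| => w t * v ord0 (enum_rank t))}.
  apply: (@continuousM _ _ (fun _ => w t) (fun v : 'rV[R]_#|T| => v ord0 (enum_rank t))).
    exact: cst_continuous.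
  exact: coord_continuous.
exact: (@continuousD R R^o _ _ _ v H1 (IH v)).
Qed.


Lemma lin_max (T J : finType) (a : J -> T -> R) (b : J -> R) (c : T -> R)
  (f0 : T -> R) :
  (forall t, 0 <= f0 t) -> (forall t, f0 t <= 1) ->
  (forall j, b j <= \sum_(t : T) a j t * f0 t) ->
  exists f : T -> R, [/\ forall t, 0 <= f t, forall t, f t <= 1,
    forall j, b j <= \sum_(t : T) a j t * f t &
    forall g : T -> R, (forall t, 0 <= g t) -> (forall t, g t <= 1) ->
      (forall j, b j <= \sum_(t : T) a j t * g t) ->
      \sum_(t : T) c t * g t <= \sum_(t : T) c t * f t].
Proof.
move=> H0 H1 Hb.
pose phi (v : 'rV[R]_#|T|) (t : T) := v ord0 (enum_rank t).
pose psi (f : T -> R) : 'rV[R]_#|T| := \row_i f (enum_val i).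
have phipsi f : phi (psi f) = f.
  by apply/funext => t; rewrite /phi /psi mxE enum_rankK.
pose A := [set v : 'rV[R]_#|T| | [/\ forall t, 0 <= phi v t, forall t, phi v t <= 1 &
   forall j, b j <= \sum_(t : T) a j t * phi v t]].
have Aeq : A = (\bigcap_(t in setT) (fun v => phi v t) @^-1` [set x | 0 <= x]) `&`
    (\bigcap_(t in setT) (fun v => phi v t) @^-1` [set x | x <= 1]) `&`
    (\bigcap_(j in setT) (fun v => \sum_(t : T) a j t * phi v t) @^-1` [set x | b j <= x]).
  apply/seteqP; split => v /=.
    by case=> h1 h2 h3; split; [split|] => i _ /=.
  by case=> -[h1 h2] h3; split => i; [exact: h1|exact: h2|exact: h3].
have Acl : closed A.
  rewrite Aeq; apply: closedI; first apply: closedI.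
  - apply: closed_bigI => t _; apply: preimage_closed; last exact: closed_ge.
    by move=> v _; exact: coord_continuous.
  - apply: closed_bigI => t _; apply: preimage_closed; last exact: closed_le.
    by move=> v _; exact: coord_continuous.
  - apply: closed_bigI => j _; apply: preimage_closed; last exact: closed_ge.
    by move=> v _; exact: lin_cont_seq.
have Aco : compact A.
  have Box : compact [set v : 'rV[R]_#|T| | forall i, `[(0:R), 1] (v ord0 i)].
    apply: (@rV_compact _ _ (fun=> `[(0:R), 1]%classic)) => _.
    exact: segment_compact.
  apply: subclosed_compact Acl Box _ => v [h1 h2 _] i /=.
  have := h1 (enum_val i); have := h2 (enum_val i).
  by rewrite /phi enum_valK in_itv /= => -> ->.
have A0 : A !=set0 by exists (psi f0); rewrite /A /= phipsi.
have Fc : {within A, continuous (fun v => \sum_(t : T) c t * phi v t)}.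
  apply: continuous_subspaceT => v; exact: lin_cont_seq.
have [v vA vmax] := EVT_max_rV A0 Aco Fc.
move: vA; rewrite inE => -[v1 v2 v3].
exists (phi v); split => // g g1 g2 g3.
have := vmax (psi g); rewrite phipsi; apply.
by rewrite inE /A /= phipsi.
Qed.


Lemma finmax (I : finType) (Q : I -> Prop) (h : I -> R) (i0 : I) :
  Q i0 -> exists i, Q i /\ forall j, Q j -> h j <= h i.
Proof.
move=> Qi0.
have Pi0 : (fun i => `[< Q i >]) i0 by apply/asboolP.
case: (@arg_maxP _ _ I i0 (fun i => `[< Q i >]) h Pi0) => i /asboolP Qi Hi.
by exists i; split => // j /asboolP /Hi.
Qed.

Lemma sup_attained (E : set R) x : E x -> (forall y, E y -> y <= x) -> sup E = x.
Proof.
move=> Ex ub; apply/le_anti/andP; split.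
  by apply: ge_sup; [exists x|].
by apply: ub_le_sup => //; exists x.
Qed.

Lemma dist_le1 (T : finType) (p : T -> R) x : dist p -> p x <= 1.
Proof.
case=> p0 p1; rewrite -p1 (bigD1 x) //= lerDl.
by apply: sumr_ge0 => y _.
Qed.

End LP.

Section Main.
Variables (R : realType) (X A : finType) (M : nat)
  (vD vU : X -> 'I_M -> A -> R) (bD : X -> 'I_M -> R).
Hypotheses (HX : (0 < #|X|)%N) (HA : (0 < #|A|)%N) (HbD : forall x, dist (bD x)).

Let S := Signal M A.
Let g (x : X) (s : S) := \sum_(l < M) bD x l * vD x l (s l).
Let f (p : X -> R) (s : S) := \sum_(x : X) p x * g x s.
Let obed (s : S) (p : X -> R) :=
  forall ah l, 0 <= \sum_(x : X) (vU x l (s l) - vU x l ah) * p x.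
Let pid (s0 : S) : X -> S -> R := fun _ s => (s == s0)%:R.

Lemma sum_ind (T : finType) (t0 : T) (F : T -> R) :
  \sum_(t : T) (t == t0)%:R * F t = F t0.
Proof.
rewrite (bigD1 t0) //= eqxx mul1r big1 ?addr0 // => t /negbTE ->.
by rewrite mul0r.
Qed.

Lemma pid_ok s0 p : obed s0 p ->
  [/\ generator (pid s0), zero_info (pid s0), credible vU (pid s0) p &
      vbar vD bD (pid s0) p = f p s0].
Proof.
move=> ob; split.
- move=> x; split => [s|]; first by rewrite /pid ler0n.
  by have := @sum_ind _ s0 (fun _ => 1); under eq_bigr do rewrite mulr1.
- by [].
- move=> s ah l; rewrite /pid; case: (eqVneq s s0) => [->|ne].
    by under eq_bigr do rewrite mulr1; exact: ob.
  by rewrite big1 // => x _; rewrite mulr0 mul0r.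
- rewrite /vbar /f; apply: eq_bigr => x _; congr (_ * _).
  exact: (@sum_ind _ s0 (g x)).
Qed.

Lemma obed_ex p : exists s, obed s p.
Proof.
have [a0 _] := card_gt0P HA.
have : forall l : 'I_M, exists a, forall a', 
    \sum_(x : X) vU x l a' * p x <= \sum_(x : X) vU x l a * p x.
  move=> l; have [a [_ Ha]] := @finmax R A (fun _ => True) (fun a => \sum_(x : X) vU x l a * p x) a0 I.
  by exists a => a'; exact: Ha.
case/choice => am Ham; exists [ffun l => am l] => ah l.
rewrite ffunE; under eq_bigr do rewrite mulrBl.
by rewrite sumrB subr_ge0.
Qed.

Lemma zi_bound pi p s1 : generator pi -> zero_info pi -> credible vU pi p ->
  (forall s, obed s p -> f p s <= f p s1) -> vbar vD bD pi p <= f p s1.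
Proof.
move=> gen zi cr smax.
have [x0 _] := card_gt0P HX.
have E : vbar vD bD pi p = \sum_(s : S) pi x0 s * f p s.
  rewrite /vbar; under eq_bigr do rewrite mulr_sumr.
  rewrite exchange_big; apply: eq_bigr => s _.
  rewrite /f mulr_sumr; apply: eq_bigr => x _.
  by rewrite (zi s x x0) mulrCA.
rewrite E; have [_ H1] := gen x0; rewrite -[leRHS]mul1r -H1 mulr_suml.
apply: ler_sum => s _.
have [g0 _] := gen x0; have := g0 s; rewrite le_eqVlt => /orP[/eqP <-|pos].
  by rewrite !mul0r.
rewrite ler_pM2l //; apply: smax => ah l.
have := cr s ah l.
have -> : \sum_(x : X) (vU x l (s l) - vU x l ah) * pi x s * p x =
   pi x0 s * \sum_(x : X) (vU x l (s l) - vU x l ah) * p x.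
  rewrite mulr_sumr; apply: eq_bigr => x _; rewrite (zi s x x0).
  by rewrite mulrAC mulrC.
by rewrite pmulr_rge0.
Qed.

Lemma L_tilde p : dist p ->
  (exists pi, [/\ generator pi, zero_info pi, credible vU pi p &
                 vbar vD bD pi p = tildeVD vD vU bD p]) /\
  (forall pi, generator pi -> zero_info pi -> credible vU pi p ->
     vbar vD bD pi p <= tildeVD vD vU bD p).
Proof.
move=> dp.
have [s0 ob0] := obed_ex p.
have [s1 [ob1 m1]] := @finmax R S (fun s => obed s p) (f p) s0 ob0.
have [g1 z1 c1 v1] := @pid_ok s1 p ob1.
have T : tildeVD vD vU bD p = f p s1.
  apply: sup_attained; first by exists (pid s1); split.
  by move=> y [pi [gp zp cp ->]]; apply: zi_bound.
split; first by exists (pid s1); split => //; rewrite T.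
by move=> pi gp zp cp; rewrite T; apply: zi_bound.
Qed.

Let aC (s : S) (j : (A * 'I_M) + bool) (x : X) : R :=
  match j with inl (ah, l) => vU x l (s l) - vU x l ah | inr true => 1 | inr false => -1 end.
Let bC (j : (A * 'I_M) + bool) : R :=
  match j with inl _ => 0 | inr true => 1 | inr false => -1 end.

Lemma cons_iff s p : (forall x, 0 <= p x) ->
  ((dist p /\ obed s p) <-> forall j, bC j <= \sum_(x : X) aC s j x * p x).
Proof.
move=> p0; split.
  case=> -[_ p1] ob [[ah l]|[|]] /=; first exact: ob.
    by under eq_bigr do rewrite mul1r; rewrite p1.
  by under eq_bigr do rewrite mulN1r; rewrite sumrN p1.
move=> H; split; last by move=> ah l; exact: (H (inl (ah, l))).
split => //; apply/le_anti/andP; split.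
  have := H (inr false) => /=; under eq_bigr do rewrite mulN1r.
  by rewrite sumrN lerN2.
by have := H (inr true) => /=; under eq_bigr do rewrite mul1r.
Qed.

Lemma L_F : exists p1 s1, [/\ dist p1, obed s1 p1 &
  forall p s, dist p -> obed s p -> f p s <= f p1 s1].
Proof.
have H : forall s : S, exists p : X -> R, (exists p', dist p' /\ obed s p') ->
   [/\ dist p, obed s p & forall p', dist p' -> obed s p' -> f p' s <= f p s].
  move=> s; case: (pselect (exists p', dist p' /\ obed s p')); last first.
    by move=> NQ; exists (fun _ => 0) => /NQ.
  move=> [p' [dp' ob']].
  have := @lin_max R X _ (aC s) bC (fun x => g x s) p' dp'.1 (fun x => @dist_le1 R X p' x dp')
     ((cons_iff s p' dp'.1).1 (conj dp' ob')).
  case=> p [q0 q1 qc qmax]; exists p => _.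
  have [dp obp] := (cons_iff s p q0).2 qc; split => // p'' dp'' ob''.
  have := qmax p'' dp''.1 (fun x => @dist_le1 R X p'' x dp'') ((cons_iff s p'' dp''.1).1 (conj dp'' ob'')).
  by rewrite /f; under eq_bigr do rewrite mulrC; under [in X in _ <= X -> _]eq_bigr do rewrite mulrC.
case/choice: H => P HP.
have [x0 _] := card_gt0P HX.
pose d0 : X -> R := fun x => (x == x0)%:R.
have dd0 : dist d0.
  split => [x|]; first by rewrite /d0 ler0n.
  by have := @sum_ind _ x0 (fun _ => 1); under eq_bigr do rewrite mulr1.
have [s0 ob0] := obed_ex d0.
have Q0 : exists p', dist p' /\ obed s0 p' by exists d0.
have [s1 [Q1 m1]] := @finmax R S (fun s => exists p', dist p' /\ obed s p')
   (fun s => f (P s) s) s0 Q0.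
have [dp1 ob1 mx1] := HP s1 Q1.
exists (P s1), s1; split => // p s dp obs.
have Qs : exists p', dist p' /\ obed s p' by exists p.
have [_ _ mxs] := HP s Qs.
exact: le_trans (mxs p dp obs) (m1 s Qs).
Qed.

Lemma L_F2 p1 s1 : (forall p s, dist p -> obed s p -> f p s <= f p1 s1) ->
  forall p pi, dist p -> generator pi -> credible vU pi p ->
  vbar vD bD pi p <= f p1 s1.
Proof.
move=> Hmax p pi [p0 psum] gen cr.
have E : vbar vD bD pi p = \sum_(s : S) \sum_(x : X) (p x * pi x s) * g x s.
  rewrite /vbar; under eq_bigr do rewrite mulr_sumr.
  by rewrite exchange_big; apply: eq_bigr => s _; apply: eq_bigr => x _; rewrite mulrA.
have Hone : \sum_(s : S) \sum_(x : X) p x * pi x s = 1.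
  rewrite exchange_big -psum; apply: eq_bigr => x _.
  by rewrite -mulr_sumr (gen x).2 mulr1.
rewrite E -[leRHS]mul1r -Hone mulr_suml; apply: ler_sum => s _.
set m := \sum_(x : X) p x * pi x s.
have m0 : 0 <= m by apply: sumr_ge0 => x _; apply: mulr_ge0 => //; exact: (gen x).1.
move: m0; rewrite le_eqVlt => /orP[/eqP m0|mpos].
  have Z : forall x, p x * pi x s = 0.
    have nn : forall y, true -> 0 <= p y * pi y s.
      by move=> y _; apply: mulr_ge0 => //; exact: (gen y).1.
    by move=> x; apply: (psumr_eq0P nn (esym m0)).
  by rewrite -m0 mul0r big1 // => x _; rewrite Z mul0r.
have mne : m != 0 by rewrite gt_eqF.
pose p' x := p x * pi x s / m.
have dp' : dist p'.
  split => [x|]; first by apply: divr_ge0; [apply: mulr_ge0 => //; exact: (gen x).1|exact: ltW].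
  by rewrite /p' -mulr_suml divff.
have ob' : obed s p'.
  move=> ah l; have := cr s ah l.
  have -> : \sum_(x : X) (vU x l (s l) - vU x l ah) * p' x =
     (\sum_(x : X) (vU x l (s l) - vU x l ah) * pi x s * p x) / m.
    by rewrite mulr_suml; apply: eq_bigr => x _; rewrite /p'; ring.
  move=> H; apply: divr_ge0 => //; exact: ltW.
have -> : \sum_(x : X) (p x * pi x s) * g x s = m * f p' s.
  rewrite /f mulr_sumr; apply: eq_bigr => x _; rewrite /p'; field; exact: mne.
by rewrite ler_pM2l //; apply: Hmax.
Qed.

Let JV := ((X * bool) + (S * A * 'I_M))%type.
Let aV (j : JV) (t : X * S) : R :=
  match j with
  | inl (x, true) => (t.1 == x)%:R
  | inl (x, false) => - (t.1 == x)%:R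
  | inr (s, ah, l) => (t.2 == s)%:R * (vU t.1 l (s l) - vU t.1 l ah)
  end.
Let bV (p : X -> R) (j : JV) : R :=
  match j with
  | inl (x, true) => p x
  | inl (x, false) => - p x
  | inr _ => 0
  end.

Lemma sum_pair (F : X * S -> R) : \sum_(t : X * S) F t = \sum_(x : X) \sum_(s : S) F (x, s).
Proof. by rewrite pair_bigA; apply: eq_bigr => -[x s]. Qed.

Lemma cons_q p (q : X * S -> R) :
  (forall j, bV p j <= \sum_(t : X * S) aV j t * q t) <->
  ((forall x, \sum_(s : S) q (x, s) = p x) /\
   forall (s : S) ah l, 0 <= \sum_(x : X) (vU x l (s l) - vU x l ah) * q (x, s)).
Proof.
have E1 x : \sum_(t : X * S) aV (inl (x, true)) t * q t = \sum_(s : S) q (x, s).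
  rewrite sum_pair /=.
  under eq_bigr do rewrite -mulr_sumr.
  exact: (@sum_ind _ x (fun y => \sum_(s : S) q (y, s))).
have E2 (s : S) ah l : \sum_(t : X * S) aV (inr (s, ah, l)) t * q t =
    \sum_(x : X) (vU x l (s l) - vU x l ah) * q (x, s).
  rewrite sum_pair /=; apply: eq_bigr => x _.
  under eq_bigr do rewrite -mulrA.
  exact: (@sum_ind _ s (fun s' => (vU x l (s l) - vU x l ah) * q (x, s'))).
have E3 x : \sum_(t : X * S) aV (inl (x, false)) t * q t = - \sum_(s : S) q (x, s).
  rewrite -E1 -sumrN; apply: eq_bigr => t _ /=; by rewrite mulNr.
split.
  move=> H; split; last by move=> s ah l; rewrite -E2; exact: (H (inr (s, ah, l))).
  move=> x; apply/le_anti/andP; split.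
    by have := H (inl (x, false)); rewrite E3 /= lerN2.
  by have := H (inl (x, true)); rewrite E1.
case=> H1 H2 [[x [|]]|[[s ah] l]].
- by rewrite E1 H1.
- by rewrite E3 H1.
- by rewrite E2; exact: H2.
Qed.

Lemma obj_q (q : X * S -> R) :
  \sum_(t : X * S) g t.1 t.2 * q t = \sum_(x : X) \sum_(s : S) g x s * q (x, s).
Proof. exact: sum_pair. Qed.

Lemma qpi_ok p pi : dist p -> generator pi ->
  [/\ (forall t : X * S, 0 <= p t.1 * pi t.1 t.2),
      (forall t : X * S, p t.1 * pi t.1 t.2 <= 1),
      (forall x, \sum_(s : S) p x * pi x s = p x),
      (forall (s : S) ah l, \sum_(x : X) (vU x l (s l) - vU x l ah) * (p x * pi x s) =
          \sum_(x : X) (vU x l (s l) - vU x l ah) * pi x s * p x) &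
      \sum_(x : X) \sum_(s : S) g x s * (p x * pi x s) = vbar vD bD pi p].
Proof.
move=> dp gen; split.
- by move=> t; apply: mulr_ge0; [exact: dp.1|exact: (gen t.1).1].
- move=> t; apply: mulr_ile1; [exact: dp.1|exact: (gen t.1).1|exact: dist_le1|exact: dist_le1].
- by move=> x; rewrite -mulr_sumr (gen x).2 mulr1.
- by move=> s ah l; apply: eq_bigr => x _; rewrite mulrA mulrAC.
- rewrite /vbar; apply: eq_bigr => x _; rewrite mulr_sumr; apply: eq_bigr => s _.
  by rewrite /g mulrC mulrA.
Qed.

Lemma L_VD p : dist p ->
  (exists pi, [/\ generator pi, credible vU pi p & vbar vD bD pi p = VD vD vU bD p]) /\
  (forall pi, generator pi -> credible vU pi p -> vbar vD bD pi p <= VD vD vU bD p).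
Proof.
move=> dp.
have [s0 ob0] := obed_ex p.
have [g0 _ c0 _] := @pid_ok s0 p ob0.
have [q00 q01 q02 q03 _] := @qpi_ok _ _ dp g0.
have feas0 : forall j, bV p j <= \sum_(t : X * S) aV j t * (p t.1 * pid s0 t.1 t.2).
  apply/cons_q; split => // s ah l; rewrite (q03 s ah l); exact: c0.
have [q [qa qb qc qmax]] := @lin_max R _ _ aV (bV p) (fun t => g t.1 t.2) _ q00 q01 feas0.
have [qs qob] := (cons_q p q).1 qc.
have [a0 _] := card_gt0P HA.
pose sD : S := s0.
pose pis (x : X) (s : S) : R := if p x == 0 then (s == sD)%:R else q (x, s) / p x.
have qE : forall x s, q (x, s) = p x * pis x s.
  move=> x s; rewrite /pis; case: eqP => [px0|/eqP pxn].
    rewrite px0 mul0r.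
    have nn : forall s', true -> 0 <= q (x, s') by move=> s' _; exact: qa.
    by have := psumr_eq0P nn; rewrite qs px0 => /(_ erefl s isT).
  by rewrite mulrC divfK.
have gs : generator pis.
  move=> x; rewrite /pis; case: eqP => [_|/eqP pxn].
    exact: (g0 x).
  split => [s|]; first by apply: divr_ge0; [exact: qa|exact: dp.1].
  by rewrite -mulr_suml qs divff.
have [_ _ _ q3 q4] := @qpi_ok _ _ dp gs.
have cs : credible vU pis p.
  move=> s ah l; rewrite -q3; have := qob s ah l.
  by under eq_bigr do rewrite qE.
have vs : forall pi, generator pi -> credible vU pi p -> vbar vD bD pi p <= vbar vD bD pis p.
  move=> pi gp cp.
  have [p0 p1 p2 p3 p4] := @qpi_ok _ _ dp gp.
  have fe : forall j, bV p j <= \sum_(t : X * S) aV j t * (p t.1 * pi t.1 t.2).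
    apply/cons_q; split => // s ah l; rewrite (p3 s ah l); exact: cp.
  have := qmax _ p0 p1 fe; rewrite !obj_q /= p4 -q4.
  by under [X in _ <= X -> _]eq_bigr do under eq_bigr do rewrite qE.
have VE : VD vD vU bD p = vbar vD bD pis p.
  apply: sup_attained; first by exists pis; split.
  by move=> y [pi [gp cp ->]]; apply: vs.
by split; [exists pis; split | move=> pi gp cp; rewrite VE; apply: vs].
Qed.

Lemma main_res :
  (forall p : X -> R, dist p ->
     (exists pi, [/\ generator pi, credible vU pi p &
                     vbar vD bD pi p = VD vD vU bD p]) /\
     (exists pi, [/\ generator pi, zero_info pi, credible vU pi p &
                     vbar vD bD pi p = tildeVD vD vU bD p])) /\
  (exists p0 : X -> R, dist p0 /\
     forall p, dist p -> tildeVD vD vU bD p <= tildeVD vD vU bD p0) /\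
  (forall p0 : X -> R, dist p0 ->
     (forall p, dist p -> tildeVD vD vU bD p <= tildeVD vD vU bD p0) ->
     [/\ forall p, dist p -> VD vD vU bD p <= VD vD vU bD p0,
         tildeVD vD vU bD p0 = VD vD vU bD p0 &
         exists pi0, [/\ generator pi0, zero_info pi0, credible vU pi0 p0,
                        vbar vD bD pi0 p0 = VD vD vU bD p0 &
                        forall p pi, dist p -> generator pi -> credible vU pi p ->
                          vbar vD bD pi p <= vbar vD bD pi0 p0]]).
Proof.
have [p1 [s1 [dp1 ob1 mx1]]] := L_F.
have F2 := @L_F2 _ _ mx1.
have [g1 z1 c1 v1] := @pid_ok s1 p1 ob1.
have tle p : dist p -> tildeVD vD vU bD p <= f p1 s1.
  move=> dp; have [[pi [gp zp cp <-]] _] := @L_tilde _ dp; exact: F2.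
have Vle p : dist p -> VD vD vU bD p <= f p1 s1.
  move=> dp; have [[pi [gp cp <-]] _] := @L_VD _ dp; exact: F2.
have tge : f p1 s1 <= tildeVD vD vU bD p1.
  by have [_ H] := @L_tilde _ dp1; rewrite -v1; apply: H.
have tV p : dist p -> tildeVD vD vU bD p <= VD vD vU bD p.
  move=> dp; have [[pi [gp zp cp <-]] _] := @L_tilde _ dp.
  by have [_ H] := @L_VD _ dp; apply: H.
split; first by move=> p dp; split; [exact: (@L_VD _ dp).1|exact: (@L_tilde _ dp).1].
split.
  exists p1; split => // p dp; exact: le_trans (tle p dp) tge.
move=> p0 dp0 mx0.
have e1 : tildeVD vD vU bD p0 = f p1 s1.
  by apply/le_anti/andP; split; [exact: tle|exact: le_trans tge (mx0 _ dp1)].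
have e2 : VD vD vU bD p0 = f p1 s1.
  by apply/le_anti/andP; split; [exact: Vle|rewrite -e1; exact: tV].
have [[pi0 [g0 z0 c0 v0]] _] := @L_tilde _ dp0.
split.
- by move=> p dp; rewrite e2; exact: Vle.
- by rewrite e1 e2.
- exists pi0; split => //; first by rewrite v0 e1 e2.
  by move=> p pi dp gp cp; rewrite v0 e1; exact: F2.
Qed.

End Main.

Theorem theorem3 (R : realType) (X A : finType) (M : nat)
  (vD vU : X -> 'I_M -> A -> R) (bD : X -> 'I_M -> R)
  (HX : (0 < #|X|)%N) (HA : (0 < #|A|)%N)
  (HbD : forall x, dist (bD x)) :
  (* V_D(p) and tilde v_D(p) are maxima (attained) at every p in Delta X *)
  (forall p : X -> R, dist p ->
     (exists pi, [/\ generator pi, credible vU pi p &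
                     vbar vD bD pi p = VD vD vU bD p]) /\
     (exists pi, [/\ generator pi, zero_info pi, credible vU pi p &
                     vbar vD bD pi p = tildeVD vD vU bD p])) /\
  (* existence of a maximizer p0_g of tilde v_D over Delta X *)
  (exists p0 : X -> R, dist p0 /\
     forall p, dist p -> tildeVD vD vU bD p <= tildeVD vD vU bD p0) /\
  (* any such maximizer also maximizes V_D, with equal values, and the
     joint optimum over (p, credible pi) is attained at p0 with a
     zero-information generator *)
  (forall p0 : X -> R, dist p0 ->
     (forall p, dist p -> tildeVD vD vU bD p <= tildeVD vD vU bD p0) ->
     [/\ forall p, dist p -> VD vD vU bD p <= VD vD vU bD p0,
         tildeVD vD vU bD p0 = VD vD vU bD p0 &
         exists pi0, [/\ generator pi0, zero_info pi0, credible vU pi0 p0,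
                        vbar vD bD pi0 p0 = VD vD vU bD p0 &
                        forall p pi, dist p -> generator pi -> credible vU pi p ->
                          vbar vD bD pi p <= vbar vD bD pi0 p0]]).
Proof. exact: main_res. Qed.
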